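(* If $\{x_k\}_{k\ge0}$ is log-convex, then the sequence $z_n=\sum_{k=0}^n\binom{n+k}{n-k}x_k$, $n\ge 0$, is log-convex.
   Context: A sequence $a_0,a_1,\ldots$ of nonnegative reals is log-convex if $a_{k-1}a_{k+1}\ge a_k^2$ for all $k\ge1$. *)

(* Defs.v *)
From mathcomp Require Import all_boot all_order all_algebra.
Set Implicit Arguments. Unset Strict Implicit. Unset Printing Implicit Defensive.
Import Order.TTheory GRing.Theory Num.Theory.
Local Open Scope ring_scope.

Definition log_convex (R : realFieldType) (a : nat -> R) : Prop :=
  (forall k, 0 <= a k) /\
  (forall k : nat, (1 <= k)%N -> a k ^+ 2 <= a k.-1 * a k.+1).

Definition zseq (R : realFieldType) (x : nat -> R) (n : nat) : R :=
  \sum_(0 <= k < n.+1) ('C(n + k, n - k))%:R * x k.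

(* Main.v *)
Require Import Defs.
From mathcomp Require Import all_boot all_order all_algebra.
From mathcomp Require Import zify ring lra.
Import Order.TTheory GRing.Theory Num.Theory.

Definition ab (n k : nat) : nat := 'C(n + k, k + k).

Lemma ab_small n k : (n < k)%N -> ab n k = 0%N.
Proof. move=> h; rewrite /ab bin_small //; lia. Qed.

Lemma ab_rel n k : (ab n.+1 k * (n.+1 - k) = ab n k * (n + k).+1)%N.
Proof.
rewrite /ab; have := mul_bin_down (n + k).+1 (k + k) => /=.
have -> : ((n + k).+1 - (k + k) = n.+1 - k)%N by lia.
have -> : (n.+1 + k = (n + k).+1)%N by lia.
by move=> h; rewrite mulnC -h mulnC.
Qed.

Lemma ab_tp2 n i j : (i <= j)%N -> (ab n.+1 i * ab n j <= ab n i * ab n.+1 j)%N.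
Proof.
move=> hij.
case: (leqP j n) => hjn; last by rewrite (@ab_small n j hjn) muln0.
have hi : (0 < (n.+1 - i) * (n.+1 - j))%N by rewrite muln_gt0; apply/andP; split; lia.
rewrite -(leq_pmul2r hi).
have -> : (ab n.+1 i * ab n j * ((n.+1 - i) * (n.+1 - j)) =
   (ab n.+1 i * (n.+1 - i)) * ab n j * (n.+1 - j))%N by ring.
have -> : (ab n i * ab n.+1 j * ((n.+1 - i) * (n.+1 - j)) =
   (ab n.+1 j * (n.+1 - j)) * ab n i * (n.+1 - i))%N by ring.
rewrite !ab_rel.
have -> : (ab n i * (n + i).+1 * ab n j * (n.+1 - j) =
   (ab n i * ab n j) * ((n + i).+1 * (n.+1 - j)))%N by ring.
have -> : (ab n j * (n + j).+1 * ab n i * (n.+1 - i) =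
   (ab n i * ab n j) * ((n + j).+1 * (n.+1 - i)))%N by ring.
apply: leq_mul => //.
have e1 : ((n.+1 - j) + j = n.+1)%N by lia.
have e2 : ((n.+1 - i) + i = n.+1)%N by lia.
set p := (n.+1 - j)%N in e1 *; set q := (n.+1 - i)%N in e2 *.
nia.
Qed.

Lemma ab_rec m k : (ab m.+2 k.+1 + ab m k.+1 = 2 * ab m.+1 k.+1 + ab m.+1 k)%N.
Proof.
rewrite /ab.
have -> : (m.+2 + k.+1 = (m + k).+3)%N by lia.
have -> : (m + k.+1 = (m + k).+1)%N by lia.
have -> : (m.+1 + k.+1 = (m + k).+2)%N by lia.
have -> : (m.+1 + k = (m + k).+1)%N by lia.
have -> : (k.+1 + k.+1 = (k + k).+2)%N by lia.
set N := (m + k)%N; set K := (k + k)%N.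
rewrite (binS N.+2 K.+1) (binS N.+1 K) (binS N.+1 K.+1); lia.
Qed.

Local Open Scope ring_scope.

Lemma zsE (R : realFieldType) (x : nat -> R) m N : (m < N)%N ->
  zseq x m = \sum_(k < N) (ab m k)%:R * x k.
Proof.
move=> hN; rewrite /zseq big_mkord.
rewrite (big_ord_widen N (fun k => ('C(m + k, m - k))%:R * x k)) //.
rewrite big_mkcond /=; apply: eq_bigr => i _.
case: ifP => h.
  rewrite /ab -(bin_sub (n := (m + i)%N) (m := (i + i)%N)); last by lia.
  by have -> : (m + i - (i + i) = m - i)%N by lia.
by rewrite (@ab_small m i) ?mul0r //; lia.
Qed.

Lemma lc_cross (R : realFieldType) (x : nat -> R) : log_convex x ->
  forall i j, (i <= j)%N -> x i.+1 * x j <= x i * x j.+1.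
Proof.
move=> [x0 lc] i j hij.
have [d ->] : exists d, j = (i + d)%N by exists (j - i)%N; lia.
elim: d => [|d IH]; first by rewrite addn0 mulrC.
rewrite addnS.
set c := x (i + d).+1.
have c0 : 0 <= c by apply: x0.
case: (eqVneq c 0) => [ce|cne].
  by rewrite ce mulr0; apply: mulr_ge0.
have cp : 0 < c by rewrite lt_def cne c0.
rewrite -(ler_pM2l cp).
have h1 : c ^+ 2 <= x (i + d) * x (i + d).+2 by exact: (lc (i + d).+1 isT).
apply: (@le_trans _ _ (x i.+1 * (x (i + d) * x (i + d).+2))).
  rewrite mulrCA -expr2. apply: ler_wpM2l; [exact: x0 | exact: h1].
apply: (@le_trans _ _ ((x i * c) * x (i + d).+2)).
  rewrite mulrA. apply: ler_wpM2r; [exact: x0 | exact: IH].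
by rewrite [c * _]mulrA [c * x i]mulrC.
Qed.

Lemma cb (R : realFieldType) (x : nat -> R) m : log_convex x ->
  zseq x m.+1 * zseq (fun k => x k.+1) m <= zseq x m * zseq (fun k => x k.+1) m.+1.
Proof.
move=> lcx.
have hx0 : forall k, 0 <= x k by case: lcx.
rewrite !(@zsE _ _ _ m.+2) //.
rewrite -subr_ge0 !big_distrlr /= -sumrB.
set S := \sum_(i < m.+2) _.
have -> : S = \sum_(i < m.+2) \sum_(j < m.+2)
   (((ab m i)%:R * (ab m.+1 j)%:R - (ab m.+1 i)%:R * (ab m j)%:R) * (x i * x j.+1) : R).
  rewrite /S; apply: eq_bigr => i _; rewrite -sumrB; apply: eq_bigr => j _; ring.
rewrite -(pmulrn_lge0 _ (isT : (0 < 2)%N)) mulr2n.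
rewrite [X in _ + X]exchange_big /= -big_split /=.
apply: sumr_ge0 => i _; rewrite -big_split /=; apply: sumr_ge0 => j _.
set a0i := (ab m i)%:R : R; set a0j := (ab m j)%:R : R.
set a1i := (ab m.+1 i)%:R : R; set a1j := (ab m.+1 j)%:R : R.
have -> : (a0i * a1j - a1i * a0j) * (x i * x j.+1) + (a0j * a1i - a1j * a0i) * (x j * x i.+1)
   = (a0i * a1j - a1i * a0j) * (x i * x j.+1 - x j * x i.+1) by ring.
case: (leqP i j) => hij.
  apply: mulr_ge0; rewrite subr_ge0.
    by rewrite /a0i /a1j /a1i /a0j -!natrM ler_nat; apply: ab_tp2.
  by rewrite [x j * _]mulrC; apply: (@lc_cross _ x lcx).
apply: mulr_le0; rewrite subr_le0.
  rewrite /a0i /a1j /a1i /a0j -!natrM ler_nat mulnC [X in (_ <= X)%N]mulnC.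
  by apply: ab_tp2; apply: ltnW.
by rewrite [x i * _]mulrC; apply: (@lc_cross _ x lcx); apply: ltnW.
Qed.

Lemma ab0 n : ab n 0 = 1%N.
Proof. by rewrite /ab addn0 bin0. Qed.

Lemma zrec (R : realFieldType) (x : nat -> R) m :
  zseq x m.+2 = 2 * zseq x m.+1 - zseq x m + zseq (fun k => x k.+1) m.+1.
Proof.
rewrite (@zsE _ (fun k => x k.+1) m.+1 m.+3) // !(@zsE _ _ _ m.+4) //.
rewrite big_ord_recl [X in _ = 2 * X - _ + _]big_ord_recl [X in _ = _ - X + _]big_ord_recl.
rewrite !ab0.
under eq_bigr do rewrite lift0.
under [X in _ = 2 * (_ + X) - _ + _]eq_bigr do rewrite lift0.
under [X in _ = _ - (_ + X) + _]eq_bigr do rewrite lift0.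
set S2 := \sum_(i < m.+3) _.
set S1 := \sum_(i < m.+3) _.
set S0 := \sum_(i < m.+3) _.
set W := \sum_(i < m.+3) _.
suff : S2 + S0 = 2 * S1 + W by move=> h; lra.
rewrite /S2 /S0 /S1 /W -big_split mulr_sumr -big_split /=.
apply: eq_bigr => i _.
have h : ((ab m.+2 i.+1)%:R + (ab m i.+1)%:R = 2 * (ab m.+1 i.+1)%:R + (ab m.+1 i)%:R :> R).
  by rewrite -natrM -!natrD ab_rec.
  by rewrite -mulrDl h mulrDl mulrA.
all: lia.

Qed.

Lemma delta (R : realFieldType) (x : nat -> R) m : log_convex x ->
  zseq x m.+1 ^+ 2 <= zseq x m * zseq x m.+2.
Proof.
move=> lcx; have [x0 lc] := lcx.
elim: m => [|m IH].
  rewrite !(@zsE _ x _ 3) // !big_ord_recr !big_ord0 /=.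
  rewrite /ab /=.
  have h := lc 1%N isT; rewrite /= in h.
  have := x0 0%N; have := x0 1%N; have := x0 2%N.
  move=> p2 p1 p0. rewrite !mul1r !mul0r !addr0 !add0r.
  have -> : 'C(2 + 1, 1 + 1) = 3%N by [].
  nra.
have R0 := @zrec _ x m; have R1 := @zrec _ x m.+1.
have CB := @cb _ x m.+1 lcx.
set Z0 := zseq x m in IH R0 *; set Z1 := zseq x m.+1 in IH R0 R1 CB *.
set Z2 := zseq x m.+2 in IH R0 R1 CB *; set Z3 := zseq x m.+3 in R1 *.
set W1 := zseq _ m.+1 in R0 R1 CB; set W2 := zseq _ m.+2 in R1 CB.
have id : Z1 * Z3 - Z2 ^+ 2 = (Z0 * Z2 - Z1 ^+ 2) + (Z1 * W2 - Z2 * W1).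
  by rewrite R1 R0; ring.
rewrite -subr_ge0 id; apply: addr_ge0; rewrite subr_ge0 //.
Qed.

Theorem proposition4p9 (R : realFieldType) (x : nat -> R) :
  log_convex x -> log_convex (zseq x).
Proof.
move=> lcx; have [x0 lc] := lcx; split.
  move=> n; apply: sumr_ge0 => k _; apply: mulr_ge0 => //; exact: ler0n.
case=> // m _ /=.
exact: delta.
Qed.
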